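(* In every dynamic network congestion game, there exists a blind Nash equilibrium.
   Context: An arena is $\mathcal A=(V,E,\mathsf{src},\mathsf{tgt})$ with $V$ finite, $E$ a partial function from $V\times V$ to non-decreasing piecewise-affine functions $\mathbb N\to\mathbb N$ (edge $e$ has cost function $\ell_e$); $\mathsf{tgt}$ has only a self-loop of constant cost $0$ and is reachable from every state. A dynamic NCG $(\mathcal A,n)$ has players $[n]$ all starting in $\mathsf{src}$; in each step each player simultaneously picks an edge leaving their current state, moves along it and pays $\ell_e(u)$, $u$ being the number of players choosing that same edge $e$ in that step. Strategies map finite histories to edges; $\mathrm{cost}_i(\sigma)$ is player $i$'s total payment along the outcome of $\sigma$ until reaching $\mathsf{tgt}$ ($+\infty$ if never). A strategy is blind if it depends only on the sequence of states visited by the player itself (it follows a fixed path of $\mathcal A$). A blind Nash equilibrium is a profile $\sigma$ of blind strategies such that for all $k$, $\mathrm{cost}_k(\sigma)=\inf_{\sigma'_k\text{ blind}}\mathrm{cost}_k(\langle\sigma_{-k},\sigma'_k\rangle)$, where $\langle\sigma_{-k},\sigma'_k\rangle$ replaces $\sigma_k$ by $\sigma'_k$. *)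

(* Defs.v *)
From Stdlib Require Import ClassicalEpsilon.
From mathcomp Require Import all_boot all_order all_algebra.
Set Implicit Arguments. Unset Strict Implicit. Unset Printing Implicit Defensive.
Import Order.TTheory GRing.Theory Num.Theory.

(* f : N -> N is piecewise affine: finitely many breakpoints [bs]; on each
   piece (indexed by the number of breakpoints <= x, hence an interval of N)
   f is affine with rational coefficients a, b. *)
Definition piecewise_affine (f : nat -> nat) : Prop :=
  exists (bs : seq nat) (a b : nat -> rat),
    forall x : nat,
      ((f x)%:R = a (count (fun c => (c <= x)%N) bs) * x%:R
                  + b (count (fun c => (c <= x)%N) bs))%R.

(* Arena: states V (finite), partial edge map E u v = Some l_e when there is an
   edge e from u to v with cost function l_e. *)
Definition arena_ok (V : finType) (E : V -> V -> option (nat -> nat))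
    (src tgt : V) : Prop :=
  [/\ (forall u v f, E u v = Some f ->
         {homo f : x y / x <= y} /\ piecewise_affine f),
      (exists f, E tgt tgt = Some f /\ forall x, f x = 0),
      (forall v, v != tgt -> E tgt v = None) &
      (forall v, exists s : seq V,
          path (fun a b => isSome (E a b)) v s /\ last v s = tgt)].

Definition blind (V : finType) (E : V -> V -> option (nat -> nat))
    (src : V) (p : nat -> V) : Prop :=
  p 0 = src /\ forall t, isSome (E (p t) (p t.+1)).

(* Extended naturals: None = +oo. *)
Definition enat_le (a b : option nat) : bool :=
  match a, b with
  | _, None => true
  | None, Some _ => false
  | Some x, Some y => x <= y
  end.

Definition is_inf (S : option nat -> Prop) (x : option nat) : Prop :=
  (forall y, S y -> enat_le x y) /\
  (forall z, (forall y, S y -> enat_le z y) -> enat_le z x).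

Definition reach_time (V : finType) (tgt : V) (p : nat -> V) : option nat :=
  match excluded_middle_informative (exists t, p t == tgt) with
  | left H => Some (ex_minn H)
  | right _ => None
  end.

Definition load (V : finType) (n : nat) (P : 'I_n -> nat -> V)
    (i : 'I_n) (t : nat) : nat :=
  #|[pred j : 'I_n | (P j t == P i t) && (P j t.+1 == P i t.+1)]|.

Definition edge_cost (V : finType) (E : V -> V -> option (nat -> nat))
    (u v : V) (x : nat) : nat :=
  match E u v with Some f => f x | None => 0 end.

Definition cost (V : finType) (E : V -> V -> option (nat -> nat)) (tgt : V)
    (n : nat) (P : 'I_n -> nat -> V) (i : 'I_n) : option nat :=
  match reach_time tgt (P i) with
  | Some T => Some (\sum_(t < T) edge_cost E (P i t) (P i t.+1) (load P i t))
  | None => None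
  end.

Definition deviate (V : finType) (n : nat) (P : 'I_n -> nat -> V)
    (k : 'I_n) (p' : nat -> V) : 'I_n -> nat -> V :=
  fun j => if j == k then p' else P j.

Definition blind_NE (V : finType) (E : V -> V -> option (nat -> nat))
    (src tgt : V) (n : nat) (P : 'I_n -> nat -> V) : Prop :=
  (forall i, blind E src (P i)) /\
  forall k : 'I_n,
    is_inf (fun c => exists p', blind E src p' /\ c = cost E tgt (deviate P k p') k)
           (cost E tgt P k).

(* Main.v *)
Require Import Defs.
From mathcomp Require Import all_boot all_order all_algebra.
From Stdlib Require Import ClassicalEpsilon FunctionalExtensionality.
Set Implicit Arguments. Unset Strict Implicit. Unset Printing Implicit Defensive.

Definition mcnt (V : finType) (n : nat) (P : 'I_n -> nat -> V) t (e : V * V) :=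
  #|[pred j : 'I_n | (P j t == e.1) && (P j t.+1 == e.2)]|.
Definition mcnt' (V : finType) (n : nat) (P : 'I_n -> nat -> V) k t (e : V * V) :=
  #|[pred j : 'I_n | (j != k) && ((P j t == e.1) && (P j t.+1 == e.2))]|.
Definition FF (V : finType) (E : V -> V -> option (nat -> nat)) (e : V * V) m :=
  \sum_(x < m) edge_cost E e.1 e.2 x.+1.
Definition Phi (V : finType) (E : V -> V -> option (nat -> nat)) n
  (P : 'I_n -> nat -> V) t := \sum_(e : V * V) FF E e (mcnt P t e).
Definition Sp (V : finType) (E : V -> V -> option (nat -> nat)) n
  (P : 'I_n -> nat -> V) k t := \sum_(e : V * V) FF E e (mcnt' P k t e).
Definition ci (V : finType) (E : V -> V -> option (nat -> nat)) n
  (P : 'I_n -> nat -> V) k t := edge_cost E (P k t) (P k t.+1) (load P k t).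

Lemma mcnt_split (V : finType) n (P : 'I_n -> nat -> V) k t e :
  mcnt P t e = mcnt' P k t e + ((P k t, P k t.+1) == e).
Proof.
rewrite /mcnt /mcnt' (cardD1 k) addnC; congr (_ + _).
Qed.

Lemma phi_split (V : finType) (E : V -> V -> option (nat -> nat)) n
  (P : 'I_n -> nat -> V) k t : Phi E P t = Sp E P k t + ci E P k t.
Proof.
rewrite /Phi /Sp /ci (bigD1 (P k t, P k t.+1)) //= [X in _ = X + _](bigD1 (P k t, P k t.+1)) //=.
have -> : load P k t = mcnt P t (P k t, P k t.+1) by [].
rewrite (mcnt_split P k) eqxx addn1 /FF big_ord_recr /=.
rewrite -addnA [X in _ + X]addnC addnA; congr (_ + _ + _).
apply: eq_bigr => e he; rewrite (mcnt_split P k) eq_sym (negbTE he) addn0 //.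
Qed.

Lemma Sp_dev (V : finType) (E : V -> V -> option (nat -> nat)) n
  (P : 'I_n -> nat -> V) k p' t : Sp E (deviate P k p') k t = Sp E P k t.
Proof.
apply: eq_bigr => e _; congr FF; apply: eq_card => j; rewrite !inE /deviate.
by case: eqP.
Qed.

Lemma ec0 (V : finType) (E : V -> V -> option (nat -> nat)) src tgt x :
  arena_ok E src tgt -> edge_cost E tgt tgt x = 0.
Proof. by rewrite /edge_cost; case=> _ [f [-> h]] _ _; rewrite h. Qed.

Lemma stay1 (V : finType) (E : V -> V -> option (nat -> nat)) src tgt p t :
  arena_ok E src tgt -> blind E src p -> p t = tgt -> p t.+1 = tgt.
Proof.
case=> _ _ h3 _ [_ hb] ht; have := hb t; rewrite ht.
by case: (eqVneq (p t.+1) tgt) => // /h3 ->.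
Qed.

Lemma stay (V : finType) (E : V -> V -> option (nat -> nat)) src tgt p t t' :
  arena_ok E src tgt -> blind E src p -> p t = tgt -> t <= t' -> p t' = tgt.
Proof.
move=> ha hb ht /subnK <-; elim: (t' - t) => [|d IH] //=.
by rewrite addSn; apply: stay1 ha hb IH.
Qed.

Lemma phi0 (V : finType) (E : V -> V -> option (nat -> nat)) src tgt n
  (P : 'I_n -> nat -> V) t :
  arena_ok E src tgt -> (forall i, P i t = tgt) -> (forall i, P i t.+1 = tgt) ->
  Phi E P t = 0.
Proof.
move=> ha h1 h2; apply: big1 => [[u v]] _.
case: (boolP ((u == tgt) && (v == tgt))) => [/andP[/eqP -> /eqP ->]|huv].
  by apply: big1 => x _; apply: ec0 ha.
rewrite /mcnt eq_card0; first by rewrite /FF big_ord0.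
by move=> j; rewrite !inE h1 h2 /= ![tgt == _]eq_sym; apply/negbTE.
Qed.

Lemma cost_cases (V : finType) (E : V -> V -> option (nat -> nat)) tgt n
  (P : 'I_n -> nat -> V) k :
  cost E tgt P k = None \/ exists T, P k T = tgt.
Proof.
rewrite /cost /reach_time; case: excluded_middle_informative => [h|]; last by left.
by right; case: h => T /eqP; exists T.
Qed.

Lemma cost_some (V : finType) (E : V -> V -> option (nat -> nat)) src tgt n
  (P : 'I_n -> nat -> V) k H :
  arena_ok E src tgt -> blind E src (P k) -> P k H = tgt ->
  cost E tgt P k = Some (\sum_(0 <= t < H) ci E P k t).
Proof.
move=> ha hb hH; rewrite /cost /reach_time; case: excluded_middle_informative => [h|[]]; last first.
  by exists H; rewrite hH.
case: ex_minnP => T /eqP hT hmin; congr Some.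
have le : T <= H by apply: hmin; rewrite hH.
rewrite /ci; rewrite -(big_mkord xpredT (fun t => edge_cost E (P k t) (P k t.+1) (load P k t))) (big_cat_nat (leq0n T) le) /= [X in _ = _ + X]big1_seq ?addn0 //.
move=> t; rewrite mem_index_iota => /and3P[_ hTt _].
rewrite (stay ha hb hT hTt) (stay ha hb hT (leqW hTt)); exact: ec0 ha.
Qed.

Definition PhiH (V : finType) (E : V -> V -> option (nat -> nat)) n
  (P : 'I_n -> nat -> V) H := \sum_(0 <= t < H) Phi E P t.

Lemma PhiH_ext (V : finType) (E : V -> V -> option (nat -> nat)) src tgt n
  (P : 'I_n -> nat -> V) H H' :
  arena_ok E src tgt -> (forall i, blind E src (P i)) -> (forall i, P i H = tgt) ->
  H <= H' -> PhiH E P H' = PhiH E P H.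
Proof.
move=> ha hb hH le; rewrite /PhiH (big_cat_nat (leq0n H) le) /= [X in _ + X = _]big1_seq ?addn0 //.
move=> t; rewrite mem_index_iota => /and3P[_ hTt _].
apply: (phi0 ha) => i; [exact: (stay ha (hb i) (hH i) hTt) | exact: (stay ha (hb i) (hH i) (leqW hTt))].
Qed.

Lemma PhiH_split (V : finType) (E : V -> V -> option (nat -> nat)) n
  (P : 'I_n -> nat -> V) k H :
  PhiH E P H = \sum_(0 <= t < H) Sp E P k t + \sum_(0 <= t < H) ci E P k t.
Proof. by rewrite /PhiH -big_split; apply: eq_bigr => t _; apply: phi_split. Qed.

Lemma init_path (V : finType) (E : V -> V -> option (nat -> nat)) src tgt :
  arena_ok E src tgt -> exists p H, blind E src p /\ p H = tgt.
Proof.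
move=> ha; have [_ [f [hf _]] _ hp] := ha; have [s [hs hl]] := hp src.
have hL : nth tgt (src :: s) (size s) = tgt by rewrite -(last_nth tgt) hl.
exists (fun t => nth tgt (src :: s) t), (size s); split => //.
split=> // t; case: (ltnP t (size s)) => ht.
  by move/pathP: hs => /(_ tgt t ht).
rewrite [nth _ _ t.+1]nth_default /= ?ltnS //.
case: (leqP t (size s)) => ht'.
  have -> : t = size s by apply/eqP; rewrite eqn_leq ht ht'.
  by rewrite hL hf.
by rewrite nth_default /= ?hf.
Qed.

Theorem lemmaB1 (V : finType) (E : V -> V -> option (nat -> nat)) (src tgt : V)
    (n : nat) :
  arena_ok E src tgt ->
  exists P : 'I_n -> nat -> V, blind_NE E src tgt P.
Proof.
move=> ha.
have [p0 [H0 [hb0 hH0]]] := init_path ha.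
have exm : exists m, exists (P : 'I_n -> nat -> V) H,
    ((forall i, blind E src (P i)) /\ (forall i : 'I_n, P i H = tgt)) /\ PhiH E P H = m.
  by exists (PhiH E (fun _ : 'I_n => p0) H0), (fun _ => p0), H0.
pose Qm m := exists (P : 'I_n -> nat -> V) H,
    ((forall i, blind E src (P i)) /\ (forall i : 'I_n, P i H = tgt)) /\ PhiH E P H = m.
pose pr m := if excluded_middle_informative (Qm m) then true else false.
have prP m : pr m -> Qm m by rewrite /pr; case: excluded_middle_informative.
have Ppr m : Qm m -> pr m by rewrite /pr; case: excluded_middle_informative.
have exm' : exists m, pr m by case: exm => m hm; exists m; apply: Ppr.
case: (ex_minnP exm') => m /prP [P [H [[hb hH] hm]]] hmin'.
have hmin : forall m', Qm m' -> m <= m' by move=> m' /Ppr; apply: hmin'.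
exists P; split => // k.
have cP : cost E tgt P k = Some (\sum_(0 <= t < H) ci E P k t) := cost_some ha (hb k) (hH k).
split.
- move=> y [p' [hp' ->]].
  case: (cost_cases E tgt (deviate P k p') k) => [-> | [T hT]]; first by rewrite cP.
  set Q := deviate P k p'.
  have hbQ : forall j, blind E src (Q j) by move=> j; rewrite /Q /deviate; case: eqP.
  have hQ : forall j, Q j (maxn H T) = tgt.
    move=> j; rewrite /Q /deviate; case: eqP => hj.
      have := hT; rewrite /Q /deviate eqxx => hT'; exact: stay ha hp' hT' (leq_maxr _ _).
    exact: stay ha (hb j) (hH j) (leq_maxl _ _).
  rewrite (cost_some ha (hbQ k) (hQ k)) (cost_some ha (hb k) (stay ha (hb k) (hH k) (leq_maxl H T))) /=.
  have h1 := hmin (PhiH E Q (maxn H T)) (ex_intro _ Q (ex_intro _ (maxn H T) (conj (conj hbQ hQ) erefl))).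
  have h2 := PhiH_ext ha hb hH (leq_maxl H T).
  rewrite (PhiH_split _ _ k) in h1; rewrite (PhiH_split _ _ k) in h2.
  have e : \sum_(0 <= t < maxn H T) Sp E Q k t = \sum_(0 <= t < maxn H T) Sp E P k t.
    by apply: eq_bigr => t _; apply: Sp_dev.
  by rewrite e -hm -h2 leq_add2l in h1.
- move=> z hz; apply: hz; exists (P k); split => //.
  have -> : deviate P k (P k) = P.
    by apply: functional_extensionality => j; rewrite /deviate; case: eqP => // ->.
  by [].
Qed.
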